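(* Let $\Lambda$ be an admissible temporal logic over a temporal language $\mathcal L$, let $W_c$ be the set of prime $\mathcal L$-types, ordered by $\Phi\preccurlyeq_c\Psi$ iff $\Phi^+\subseteq\Psi^+$ and $\Psi^-\subseteq\Phi^-$, and let $S_c\subseteq W_c\times W_c$ be the relation $\Phi\mathrel{S_c}\Psi$ iff the pair $(\Phi,\Psi)$ is sensible. Then $S_c$ is a function $W_c\to W_c$ which is monotone (i.e. $\Phi\preccurlyeq_c\Psi$ implies $S_c(\Phi)\preccurlyeq_c S_c(\Psi)$). If moreover $(\circ\varphi\to\circ\psi)\to\circ(\varphi\to\psi)$ is an axiom of $\Lambda$ (for all $\varphi,\psi$), then $S_c$ is also open: whenever $S_c(\Phi)\preccurlyeq_c\Psi$, there is $\Theta\in W_c$ with $\Phi\preccurlyeq_c\Theta$ and $S_c(\Theta)=\Psi$.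
   Context: Formulas are built from $\bot$ and propositional variables using $\wedge,\vee,\to$ and modalities $\circ,\Diamond,\Box,\forall$. A temporal language $\mathcal L_M$ ($M\subseteq\{\Diamond,\Box,\forall\}$) uses $\bot$, variables, $\wedge,\vee,\to,\circ$ and only modalities in $M$. ${\sf ITL}^0_M$ denotes the logic over $\mathcal L_M$ axiomatized by intuitionistic propositional logic, (N1) $\neg\circ\bot$, (N2) $\circ\varphi\wedge\circ\psi\to\circ(\varphi\wedge\psi)$, (N3) $\circ(\varphi\vee\psi)\to\circ\varphi\vee\circ\psi$, (N4) $\circ(\varphi\to\psi)\to(\circ\varphi\to\circ\psi)$, rules modus ponens and from $\varphi$ infer $\circ\varphi$; plus, if $\Diamond\in M$, axiom $\varphi\vee\circ\Diamond\varphi\to\Diamond\varphi$ and rules from $\varphi\to\psi$ infer $\Diamond\varphi\to\Diamond\psi$, from $\circ\varphi\to\varphi$ infer $\Diamond\varphi\to\varphi$; plus, if $\forall\in M$, axioms $\forall\varphi\vee\neg\forall\varphi$, $\forall(\varphi\to\psi)\to(\forall\varphi\to\forall\psi)$, $\forall(\varphi\vee\forall\psi)\to\forall\varphi\vee\forall\psi$, $\forall\varphi\to\varphi$, $\forall\varphi\to\forall\forall\varphi$, $\forall\varphi\leftrightarrow\circ\forall\varphi$ and rule from $\varphi$ infer $\forall\varphi$. An admissible temporal logic over $\mathcal L_M$ is a set of $\mathcal L_M$-formulas containing all substitution instances of the axioms of ${\sf ITL}^0_M$ and closed under its rules. $\Gamma\vdash\Delta$ means there are finite $\Gamma'\subseteq\Gamma$,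 $\Delta'\subseteq\Delta$ with $\bigwedge\Gamma'\to\bigvee\Delta'\in\Lambda$. A prime $\mathcal L$-type is a pair $\Phi=(\Phi^+,\Phi^-)$ of sets of $\mathcal L$-formulas with $\Phi^+\cup\Phi^-=\mathcal L$ and $\Phi^+\not\vdash\Phi^-$. A pair $(\Phi,\Psi)$ is sensible if: $\circ\varphi\in\Phi^+$ implies $\varphi\in\Psi^+$; $\circ\varphi\in\Phi^-$ implies $\varphi\in\Psi^-$; $\Diamond\varphi\in\Phi^+$ implies $\varphi\in\Phi^+$ or $\Diamond\varphi\in\Psi^+$; $\Diamond\varphi\in\Phi^-$ implies $\Diamond\varphi\in\Psi^-$; $\forall\varphi\in\Phi^+$ iff $\forall\varphi\in\Psi^+$; $\forall\varphi\in\Phi^-$ iff $\forall\varphi\in\Psi^-$. *)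

(* Defs.v *)
From Stdlib Require Import List.
Import ListNotations.

Inductive form : Type :=
| Bot : form
| Var : nat -> form
| And : form -> form -> form
| Or  : form -> form -> form
| Imp : form -> form -> form
| Next : form -> form
| Dia : form -> form
| Box : form -> form
| All : form -> form.

Definition Neg (p : form) : form := Imp p Bot.
Definition Top : form := Imp Bot Bot.
Definition Iff (p q : form) : form := And (Imp p q) (Imp q p).

Record modalities : Type := Mods { hasDia : bool; hasBox : bool; hasAll : bool }.

Fixpoint inL (M : modalities) (f : form) : Prop :=
  match f with
  | Bot | Var _ => True
  | And a b | Or a b | Imp a b => inL M a /\ inL M b
  | Next a => inL M a
  | Dia a => hasDia M = true /\ inL M a
  | Box a => hasBox M = true /\ inL M a
  | All a => hasAll M = true /\ inL M a
  end.

Definition ipl_axiom (f : form) : Prop :=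
  (exists p q, f = Imp p (Imp q p)) \/
  (exists p q r, f = Imp (Imp p (Imp q r)) (Imp (Imp p q) (Imp p r))) \/
  (exists p q, f = Imp (And p q) p) \/
  (exists p q, f = Imp (And p q) q) \/
  (exists p q, f = Imp p (Imp q (And p q))) \/
  (exists p q, f = Imp p (Or p q)) \/
  (exists p q, f = Imp q (Or p q)) \/
  (exists p q r, f = Imp (Imp p r) (Imp (Imp q r) (Imp (Or p q) r))) \/
  (exists p, f = Imp Bot p).

Definition next_axiom (f : form) : Prop :=
  f = Neg (Next Bot) \/
  (exists p q, f = Imp (And (Next p) (Next q)) (Next (And p q))) \/
  (exists p q, f = Imp (Next (Or p q)) (Or (Next p) (Next q))) \/
  (exists p q, f = Imp (Next (Imp p q)) (Imp (Next p) (Next q))).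

Definition dia_axiom (f : form) : Prop :=
  exists p, f = Imp (Or p (Next (Dia p))) (Dia p).

Definition all_axiom (f : form) : Prop :=
  (exists p, f = Or (All p) (Neg (All p))) \/
  (exists p q, f = Imp (All (Imp p q)) (Imp (All p) (All q))) \/
  (exists p q, f = Imp (All (Or p (All q))) (Or (All p) (All q))) \/
  (exists p, f = Imp (All p) p) \/
  (exists p, f = Imp (All p) (All (All p))) \/
  (exists p, f = Iff (All p) (Next (All p))).

Definition itl0_axiom (M : modalities) (f : form) : Prop :=
  inL M f /\
  (ipl_axiom f \/ next_axiom f \/
   (hasDia M = true /\ dia_axiom f) \/
   (hasAll M = true /\ all_axiom f)).

Definition admissible (M : modalities) (Lam : form -> Prop) : Prop :=
  (forall f, Lam f -> inL M f) /\
  (forall f, itl0_axiom M f -> Lam f) /\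
  (forall p q, Lam p -> Lam (Imp p q) -> Lam q) /\
  (forall p, Lam p -> Lam (Next p)) /\
  (hasDia M = true ->
     (forall p q, Lam (Imp p q) -> Lam (Imp (Dia p) (Dia q))) /\
     (forall p, Lam (Imp (Next p) p) -> Lam (Imp (Dia p) p))) /\
  (hasAll M = true -> forall p, Lam p -> Lam (All p)).

Definition bigAnd (l : list form) : form := fold_right And Top l.
Definition bigOr (l : list form) : form := fold_right Or Bot l.

Definition derives (Lam : form -> Prop) (G D : form -> Prop) : Prop :=
  exists (G' D' : list form),
    (forall x, In x G' -> G x) /\ (forall x, In x D' -> D x) /\
    Lam (Imp (bigAnd G') (bigOr D')).

Record ttype : Type := TT { tpos : form -> Prop; tneg : form -> Prop }.

Definition prime_type (M : modalities) (Lam : form -> Prop) (P : ttype) : Prop :=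
  (forall f, tpos P f -> inL M f) /\ (forall f, tneg P f -> inL M f) /\
  (forall f, inL M f -> tpos P f \/ tneg P f) /\
  ~ derives Lam (tpos P) (tneg P).

Definition tle (P Q : ttype) : Prop :=
  (forall f, tpos P f -> tpos Q f) /\ (forall f, tneg Q f -> tneg P f).

Definition teq (P Q : ttype) : Prop :=
  (forall f, tpos P f <-> tpos Q f) /\ (forall f, tneg P f <-> tneg Q f).

Definition sensible (P Q : ttype) : Prop :=
  (forall f, tpos P (Next f) -> tpos Q f) /\
  (forall f, tneg P (Next f) -> tneg Q f) /\
  (forall f, tpos P (Dia f) -> tpos P f \/ tpos Q (Dia f)) /\
  (forall f, tneg P (Dia f) -> tneg Q (Dia f)) /\
  (forall f, tpos P (All f) <-> tpos Q (All f)) /\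
  (forall f, tneg P (All f) <-> tneg Q (All f)).

(* Main.v *)
Require Import Defs.
From Stdlib Require Import List Classical ClassicalEpsilon Lia Arith Cantor.
Import ListNotations.

Definition wfl (M : modalities) (l : list form) := forall x, In x l -> inL M x.

Fixpoint imps (l : list form) (p : form) : form :=
  match l with [] => p | x :: l' => Imp x (imps l' p) end.

Lemma imps_app l a p : imps (l ++ [a]) p = imps l (Imp a p).
Proof. induction l; simpl; congruence. Qed.

Lemma wf_imps M l p : inL M (imps l p) <-> wfl M l /\ inL M p.
Proof.
  unfold wfl; induction l; simpl.
  - intuition.
  - rewrite IHl. split.
    + intros [H1 [H2 H3]]. split; auto. intros x [<-|Hx]; auto.
    + intros [H1 H2]. auto.
Qed.

Lemma lam_wf {M Lam} (HA : admissible M Lam) f : Lam f -> inL M f.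
Proof. destruct HA as [H0 _]. auto. Qed.

Lemma lam_ax {M Lam} (HA : admissible M Lam) f : inL M f -> ipl_axiom f -> Lam f.
Proof. intros. destruct HA as [_ [H1 _]]. apply H1. split; auto. Qed.

Lemma lam_nax {M Lam} (HA : admissible M Lam) f : inL M f -> next_axiom f -> Lam f.
Proof. intros. destruct HA as [_ [H1 _]]. apply H1. split; auto. Qed.

Lemma lam_mp {M Lam} (HA : admissible M Lam) a b : Lam a -> Lam (Imp a b) -> Lam b.
Proof. destruct HA as [_ [_ [H1 _]]]. eauto. Qed.

Lemma lam_nec {M Lam} (HA : admissible M Lam) a : Lam a -> Lam (Next a).
Proof. destruct HA as [_ [_ [_ [H1 _]]]]. eauto. Qed.

Ltac wfs := repeat (simpl in *; match goal with
  | H : _ /\ _ |- _ => destruct H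
  | |- _ /\ _ => split
  end); auto.

Lemma lamK {M Lam} (HA : admissible M Lam) a b : inL M a -> inL M b -> Lam (Imp a (Imp b a)).
Proof. intros. apply (lam_ax HA). wfs. left; eauto. Qed.

Lemma lamS {M Lam} (HA : admissible M Lam) a b c : inL M a -> inL M b -> inL M c ->
  Lam (Imp (Imp a (Imp b c)) (Imp (Imp a b) (Imp a c))).
Proof. intros. apply (lam_ax HA). wfs. right; left; eauto. Qed.

Lemma lamI {M Lam} (HA : admissible M Lam) a : inL M a -> Lam (Imp a a).
Proof.
  intros. eapply (lam_mp HA). apply (lamK HA a a); auto.
  eapply (lam_mp HA). apply (lamK HA a (Imp a a)); wfs.
  apply (lamS HA); wfs.
Qed.

Lemma lam_weak1 {M Lam} (HA : admissible M Lam) x p : Lam p -> inL M x -> Lam (Imp x p).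
Proof. intros. eapply (lam_mp HA); eauto. apply (lamK HA); eauto using lam_wf. Qed.

Lemma lam_S1 {M Lam} (HA : admissible M Lam) x a b :
  Lam (Imp x (Imp a b)) -> Lam (Imp x a) -> Lam (Imp x b).
Proof.
  intros H1 H2. pose proof (lam_wf HA _ H1). simpl in *.
  eapply (lam_mp HA); [exact H2|]. eapply (lam_mp HA); [exact H1|].
  apply (lamS HA); wfs.
Qed.

Lemma lam_comp {M Lam} (HA : admissible M Lam) a b c :
  Lam (Imp a b) -> Lam (Imp b c) -> Lam (Imp a c).
Proof.
  intros H1 H2. pose proof (lam_wf HA _ H1). simpl in *.
  eapply (lam_S1 HA); [|exact H1]. apply (lam_weak1 HA); wfs.
Qed.

Lemma ctx_S {M Lam} (HA : admissible M Lam) l a b : wfl M l -> inL M a -> inL M b ->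
  Lam (Imp (imps l (Imp a b)) (Imp (imps l a) (imps l b))).
Proof.
  induction l; simpl; intros Hl Ha Hb.
  - apply (lamI HA). wfs.
  - assert (wfl M l) by (intros y Hy; apply Hl; simpl; auto).
    assert (inL M a0) by (apply Hl; simpl; auto).
    specialize (IHl H Ha Hb).
    pose proof (lam_wf HA _ IHl) as W. simpl in W.
    eapply (lam_comp HA).
    + eapply (lam_mp HA). apply (lam_weak1 HA a0) in IHl; eauto.
      apply (lamS HA); wfs.
    + apply (lamS HA); wfs.
Qed.

Lemma ctx_mp {M Lam} (HA : admissible M Lam) l a b :
  Lam (imps l (Imp a b)) -> Lam (imps l a) -> Lam (imps l b).
Proof.
  intros H1 H2. pose proof (lam_wf HA _ H1) as W. apply wf_imps in W.
  destruct W as [Wl Wab]. simpl in Wab.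
  eapply (lam_mp HA); [exact H2|]. eapply (lam_mp HA); [exact H1|].
  apply (ctx_S HA); wfs.
Qed.

Lemma ctx_lift {M Lam} (HA : admissible M Lam) l p : Lam p -> wfl M l -> Lam (imps l p).
Proof.
  induction l; simpl; intros; auto.
  apply (lam_weak1 HA). apply IHl; auto. intros y Hy; apply H0; simpl; auto.
  apply H0; simpl; auto.
Qed.

Lemma ctx_self {M Lam} (HA : admissible M Lam) l x : wfl M l -> inL M x -> Lam (Imp x (imps l x)).
Proof.
  induction l; simpl; intros.
  - apply (lamI HA); auto.
  - eapply (lam_comp HA). apply IHl; auto. intros y Hy; apply H; simpl; auto.
    apply (lamK HA). apply wf_imps. split; auto. intros y Hy; apply H; simpl; auto.
    apply H; simpl; auto.
Qed.

Lemma ctx_hyp {M Lam} (HA : admissible M Lam) l a : In a l -> wfl M l -> Lam (imps l a).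
Proof.
  induction l; simpl; intros Hin Hl. contradiction.
  assert (wfl M l) by (intros y Hy; apply Hl; simpl; auto).
  destruct Hin as [<-|Hin].
  - apply (ctx_self HA); auto. apply Hl; simpl; auto.
  - apply (lam_weak1 HA); auto. apply Hl; simpl; auto.
Qed.
Inductive ND (M : modalities) (Lam : form -> Prop) : list form -> form -> Prop :=
| nd_ax G p : Lam p -> ND M Lam G p
| nd_hyp G p : In p G -> ND M Lam G p
| nd_impI G a b : inL M a -> ND M Lam (G ++ [a]) b -> ND M Lam G (Imp a b)
| nd_impE G a b : ND M Lam G (Imp a b) -> ND M Lam G a -> ND M Lam G b
| nd_andI G a b : ND M Lam G a -> ND M Lam G b -> ND M Lam G (And a b)
| nd_andE1 G a b : ND M Lam G (And a b) -> ND M Lam G a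
| nd_andE2 G a b : ND M Lam G (And a b) -> ND M Lam G b
| nd_orI1 G a b : inL M b -> ND M Lam G a -> ND M Lam G (Or a b)
| nd_orI2 G a b : inL M a -> ND M Lam G b -> ND M Lam G (Or a b)
| nd_orE G a b c : ND M Lam G (Or a b) -> ND M Lam (G ++ [a]) c -> ND M Lam (G ++ [b]) c ->
    ND M Lam G c
| nd_botE G p : inL M p -> ND M Lam G Bot -> ND M Lam G p.

Lemma wfl_app M l a : wfl M l -> inL M a -> wfl M (l ++ [a]).
Proof. intros H1 H2 x Hx. apply in_app_or in Hx. destruct Hx as [H|[<-|[]]]; auto. Qed.

Lemma nd_wf {M Lam} (HA : admissible M Lam) G p : ND M Lam G p -> wfl M G -> inL M p.
Proof.
  induction 1 as [G p H|G p H|G a b Ha H IH|G a b H1 IH1 H2 IH2|G a b H1 IH1 H2 IH2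
    |G a b H IH|G a b H IH|G a b Hb H IH|G a b Ha H IH|G a b c H1 IH1 H2 IH2 H3 IH3|G p Hp H IH];
   intros Hl; simpl in *.
  - eapply lam_wf; eauto.
  - auto.
  - split; auto. apply IH. apply wfl_app; auto.
  - apply IH1 in Hl; tauto.
  - auto.
  - apply IH in Hl; tauto.
  - apply IH in Hl; tauto.
  - auto.
  - auto.
  - apply IH2. apply wfl_app; auto. apply IH1 in Hl; tauto.
  - auto.
Qed.

Lemma nd_sound {M Lam} (HA : admissible M Lam) G p : ND M Lam G p -> wfl M G -> Lam (imps G p).
Proof.
  induction 1; intros Hl.
  - apply (ctx_lift HA); auto.
  - apply (ctx_hyp HA); auto.
  - rewrite <- imps_app. apply IHND. apply wfl_app; auto.
  - eapply (ctx_mp HA); eauto.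
  - pose proof (nd_wf HA _ _ H Hl). pose proof (nd_wf HA _ _ H0 Hl).
    eapply (ctx_mp HA); [|apply IHND2; auto]. eapply (ctx_mp HA); [|apply IHND1; auto].
    apply (ctx_lift HA); auto. apply (lam_ax HA). wfs. do 4 right; left; eauto.
  - pose proof (nd_wf HA _ _ H Hl). simpl in *.
    eapply (ctx_mp HA); [|apply IHND; auto].
    apply (ctx_lift HA); auto. apply (lam_ax HA). wfs. do 2 right; left; eauto.
  - pose proof (nd_wf HA _ _ H Hl). simpl in *.
    eapply (ctx_mp HA); [|apply IHND; auto].
    apply (ctx_lift HA); auto. apply (lam_ax HA). wfs. do 3 right; left; eauto.
  - pose proof (nd_wf HA _ _ H0 Hl). simpl in *.
    eapply (ctx_mp HA); [|apply IHND; auto].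
    apply (ctx_lift HA); auto. apply (lam_ax HA). wfs. do 5 right; left; eauto.
  - pose proof (nd_wf HA _ _ H0 Hl). simpl in *.
    eapply (ctx_mp HA); [|apply IHND; auto].
    apply (ctx_lift HA); auto. apply (lam_ax HA). wfs. do 6 right; left; eauto.
  - pose proof (nd_wf HA _ _ H Hl) as Wab. simpl in Wab.
    pose proof (nd_wf HA _ _ H0 (wfl_app _ _ _ Hl (proj1 Wab))) as Wc.
    specialize (IHND1 Hl).
    specialize (IHND2 (wfl_app _ _ _ Hl (proj1 Wab))). rewrite imps_app in IHND2.
    specialize (IHND3 (wfl_app _ _ _ Hl (proj2 Wab))). rewrite imps_app in IHND3.
    eapply (ctx_mp HA); [|exact IHND1].
    eapply (ctx_mp HA); [|exact IHND3].
    eapply (ctx_mp HA); [|exact IHND2].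
    apply (ctx_lift HA); auto. apply (lam_ax HA). wfs. do 7 right; left; eauto.
  - eapply (ctx_mp HA); [|apply IHND; auto].
    apply (ctx_lift HA); auto. apply (lam_ax HA). wfs. do 8 right; eauto.
Qed.


Lemma incl_app1 (G G' : list form) a : incl G G' -> incl (G ++ [a]) (G' ++ [a]).
Proof. intros H x Hx. apply in_app_or in Hx. apply in_or_app. destruct Hx; auto. Qed.

Lemma nd_weak M Lam G p : ND M Lam G p -> forall G', incl G G' -> ND M Lam G' p.
Proof.
  induction 1; intros G' HG.
  - apply nd_ax; auto.
  - apply nd_hyp; auto.
  - apply nd_impI; auto using incl_app1.
  - eapply nd_impE; eauto.
  - apply nd_andI; eauto.
  - eapply nd_andE1; eauto.
  - eapply nd_andE2; eauto.
  - apply nd_orI1; eauto.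
  - apply nd_orI2; eauto.
  - eapply nd_orE; eauto using incl_app1.
  - apply nd_botE; eauto.
Qed.

Lemma nd_weak_app M Lam G p a : ND M Lam G p -> ND M Lam (G ++ [a]) p.
Proof. intros H. eapply nd_weak; eauto. intros x Hx; apply in_or_app; auto. Qed.

Lemma subst_ext M Lam G D a : (forall x, In x G -> ND M Lam D x) ->
  forall x, In x (G ++ [a]) -> ND M Lam (D ++ [a]) x.
Proof.
  intros H x Hx. apply in_app_or in Hx. destruct Hx as [Hx|[<-|[]]].
  - apply nd_weak_app; auto.
  - apply nd_hyp. apply in_or_app; simpl; auto.
Qed.

Lemma nd_subst M Lam G p : ND M Lam G p -> forall D, (forall x, In x G -> ND M Lam D x) -> ND M Lam D p.
Proof.
  induction 1; intros D HD.
  - apply nd_ax; auto.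
  - auto.
  - apply nd_impI; auto. apply IHND. apply subst_ext; auto.
  - eapply nd_impE; eauto.
  - apply nd_andI; eauto.
  - eapply nd_andE1; eauto.
  - eapply nd_andE2; eauto.
  - apply nd_orI1; eauto.
  - apply nd_orI2; eauto.
  - eapply nd_orE; eauto using subst_ext.
  - apply nd_botE; eauto.
Qed.

Lemma nd_cut M Lam G a b : ND M Lam G a -> ND M Lam (G ++ [a]) b -> ND M Lam G b.
Proof.
  intros H1 H2. eapply nd_subst; eauto. intros x Hx. apply in_app_or in Hx.
  destruct Hx as [Hx|[<-|[]]]; auto. apply nd_hyp; auto.
Qed.

Lemma nd_app {M Lam} G a b : Lam (Imp a b) -> ND M Lam G a -> ND M Lam G b.
Proof. intros. eapply nd_impE; [apply nd_ax|]; eauto. Qed.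

Lemma nd_orE_list M Lam G D c : inL M c -> (forall x, In x D -> ND M Lam (G ++ [x]) c) ->
  ND M Lam G (bigOr D) -> ND M Lam G c.
Proof.
  revert G. induction D; simpl; intros G Hc HD H.
  - apply nd_botE; auto.
  - eapply nd_orE; [exact H| |]. apply HD; auto.
    eapply IHD; auto.
    + intros x Hx. eapply nd_weak. apply HD. right; exact Hx.
      intros y Hy. repeat rewrite in_app_iff in *; simpl in *; tauto.
    + apply nd_hyp; apply in_or_app; simpl; auto.
Qed.

Lemma wf_bigOr M D : wfl M D -> inL M (bigOr D).
Proof. induction D; simpl; intros H; auto. split. apply H; simpl; auto. apply IHD. intros y Hy; apply H; simpl; auto. Qed.

Lemma wf_bigAnd M D : wfl M D -> inL M (bigAnd D).
Proof. induction D; simpl; intros H; auto. split. apply H; simpl; auto. apply IHD. intros y Hy; apply H; simpl; auto. Qed.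

Lemma nd_orI_list M Lam G D x : In x D -> wfl M D -> ND M Lam G x -> ND M Lam G (bigOr D).
Proof.
  induction D; simpl; intros Hin Hw H. contradiction.
  destruct Hin as [<-|Hin].
  - apply nd_orI1; auto. apply wf_bigOr. intros y Hy; apply Hw; simpl; auto.
  - apply nd_orI2; auto. apply Hw; simpl; auto. apply IHD; auto. intros y Hy; apply Hw; simpl; auto.
Qed.

Lemma nd_andE_list M Lam G l x : In x l -> ND M Lam G (bigAnd l) -> ND M Lam G x.
Proof.
  induction l; simpl; intros Hin H. contradiction.
  destruct Hin as [<-|Hin]. eapply nd_andE1; eauto. apply IHl; auto. eapply nd_andE2; eauto.
Qed.

Lemma nd_andI_list M Lam G l : (forall x, In x l -> ND M Lam G x) -> ND M Lam G (bigAnd l).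
Proof.
  induction l; simpl; intros H.
  - apply nd_impI. simpl; auto. apply nd_hyp. apply in_or_app; simpl; auto.
  - apply nd_andI; auto.
Qed.

Lemma nd_derives {M Lam} (HA : admissible M Lam) (A B : form -> Prop) G D :
  wfl M G -> (forall x, In x G -> A x) -> (forall x, In x D -> B x) ->
  ND M Lam G (bigOr D) -> derives Lam A B.
Proof.
  intros Hw HG HD H. exists G, D. split; [|split]; auto.
  assert (ND M Lam [bigAnd G] (bigOr D)).
  { eapply nd_subst; eauto. intros x Hx. eapply nd_andE_list; eauto. apply nd_hyp; simpl; auto. }
  apply (nd_sound HA) in H0; auto.
  intros y [<-|[]]. apply wf_bigAnd; auto.
Qed.

Lemma derives_nd {M Lam} (A B : form -> Prop) : derives Lam A B ->
  exists G D, (forall x, In x G -> A x) /\ (forall x, In x D -> B x) /\ ND M Lam G (bigOr D).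
Proof.
  intros [G [D [H1 [H2 H3]]]]. exists G, D. split; [|split]; auto.
  eapply nd_app; eauto. apply nd_andI_list. intros; apply nd_hyp; auto.
Qed.

Lemma pt_wf_pos {M Lam} P : prime_type M Lam P -> forall f, tpos P f -> inL M f.
Proof. intros H; apply H. Qed.
Lemma pt_wf_neg {M Lam} P : prime_type M Lam P -> forall f, tneg P f -> inL M f.
Proof. intros H; apply H. Qed.

Lemma pt_disj {M Lam} (HA : admissible M Lam) P : prime_type M Lam P ->
  forall f, tpos P f -> tneg P f -> False.
Proof.
  intros HP f H1 H2. apply HP. apply (nd_derives HA _ _ [f] [f]).
  - intros y [<-|[]]. eapply pt_wf_pos; eauto.
  - intros y [<-|[]]; auto.
  - intros y [<-|[]]; auto.
  - simpl. apply nd_orI1. simpl; auto. apply nd_hyp; simpl; auto.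
Qed.

Lemma pt_neg_iff {M Lam} (HA : admissible M Lam) P : prime_type M Lam P ->
  forall f, inL M f -> (tneg P f <-> ~ tpos P f).
Proof.
  intros HP f Hf. split.
  - intros H1 H2. eapply pt_disj; eauto.
  - intros H. destruct HP as [_ [_ [Hc _]]]. destruct (Hc f Hf); tauto.
Qed.

Lemma pt_closed {M Lam} (HA : admissible M Lam) P : prime_type M Lam P ->
  forall G f, (forall x, In x G -> tpos P x) -> ND M Lam G f -> tpos P f.
Proof.
  intros HP G f HG H.
  assert (Hw : wfl M G) by (intros x Hx; eapply pt_wf_pos; eauto).
  pose proof (nd_wf HA _ _ H Hw) as Wf.
  destruct (classic (tpos P f)) as [|Hn]; auto.
  apply (pt_neg_iff HA P HP f Wf) in Hn. exfalso. apply HP.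
  apply (nd_derives HA _ _ G [f]); auto.
  - intros y [<-|[]]; auto.
  - simpl. apply nd_orI1; simpl; auto.
Qed.

Lemma pt_or {M Lam} (HA : admissible M Lam) P : prime_type M Lam P ->
  forall a b, tpos P (Or a b) -> tpos P a \/ tpos P b.
Proof.
  intros HP a b H. pose proof (pt_wf_pos P HP _ H) as W. simpl in W.
  destruct (classic (tpos P a)); auto. destruct (classic (tpos P b)); auto.
  exfalso. apply HP. apply (nd_derives HA _ _ [Or a b] [a; b]).
  - intros y [<-|[]]; simpl; auto.
  - intros y [<-|[]]; auto.
  - intros y [<-|[<-|[]]]; apply (pt_neg_iff HA P HP); tauto.
  - eapply nd_orE. apply nd_hyp; simpl; auto.
    + simpl. apply nd_orI1; simpl; [tauto|]. apply nd_hyp; simpl; auto.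
    + simpl. apply nd_orI2; simpl; [tauto|]. apply nd_orI1; simpl; auto. apply nd_hyp; simpl; auto.
Qed.

Lemma pt_bot {M Lam} (HA : admissible M Lam) P : prime_type M Lam P -> ~ tpos P Bot.
Proof.
  intros HP H. apply HP. apply (nd_derives HA _ _ [Bot] []).
  - intros y [<-|[]]; simpl; auto.
  - intros y [<-|[]]; auto.
  - intros y [].
  - apply nd_hyp; simpl; auto.
Qed.

Lemma pt_top {M Lam} (HA : admissible M Lam) P : prime_type M Lam P -> tpos P Top.
Proof.
  intros HP. apply (pt_closed HA P HP []). intros x [].
  apply nd_impI. simpl; auto. apply nd_hyp; simpl; auto.
Qed.

Lemma lam_N1 {M Lam} (HA : admissible M Lam) : Lam (Imp (Next Bot) Bot).
Proof. apply (lam_nax HA). simpl; auto. left; reflexivity. Qed.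
Lemma lam_N3 {M Lam} (HA : admissible M Lam) a b : inL M a -> inL M b ->
  Lam (Imp (Next (Or a b)) (Or (Next a) (Next b))).
Proof. intros. apply (lam_nax HA). wfs. right; right; left; eauto. Qed.
Lemma lam_N4 {M Lam} (HA : admissible M Lam) a b : inL M a -> inL M b ->
  Lam (Imp (Next (Imp a b)) (Imp (Next a) (Next b))).
Proof. intros. apply (lam_nax HA). wfs. right; right; right; eauto. Qed.

Lemma next_mono {M Lam} (HA : admissible M Lam) a b : Lam (Imp a b) -> Lam (Imp (Next a) (Next b)).
Proof.
  intros H. pose proof (lam_wf HA _ H) as W. simpl in W.
  eapply (lam_mp HA). apply (lam_nec HA); eauto. apply (lam_N4 HA); tauto.
Qed.

Lemma nd_uncurry M Lam G D p : ND M Lam D (imps G p) -> ND M Lam (D ++ G) p.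
Proof.
  revert D. induction G; simpl; intros D H.
  - rewrite app_nil_r; auto.
  - replace (D ++ a :: G) with ((D ++ [a]) ++ G) by (rewrite <- app_assoc; reflexivity).
    apply IHG. eapply nd_impE. apply nd_weak_app; eauto. apply nd_hyp. apply in_or_app; simpl; auto.
Qed.

Lemma nd_next_imps {M Lam} (HA : admissible M Lam) G p : wfl M G -> inL M p ->
  forall D, ND M Lam D (Next (imps G p)) -> ND M Lam D (imps (map Next G) (Next p)).
Proof.
  induction G; simpl; intros Hw Hp D H; auto.
  assert (wfl M G) by (intros y Hy; apply Hw; simpl; auto).
  assert (inL M a) by (apply Hw; simpl; auto).
  apply nd_impI. simpl; auto. apply IHG; auto.
  eapply nd_impE. apply nd_weak_app. eapply nd_app; [|exact H].
  apply (lam_N4 HA); auto. apply wf_imps; auto.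
  apply nd_hyp. apply in_or_app; simpl; auto.
Qed.

Lemma nd_next {M Lam} (HA : admissible M Lam) G p : wfl M G -> ND M Lam G p ->
  ND M Lam (map Next G) (Next p).
Proof.
  intros Hw H. pose proof (nd_wf HA _ _ H Hw) as Wp.
  apply (nd_sound HA) in H; auto. apply (lam_nec HA) in H.
  apply (nd_ax M Lam []) in H. apply (nd_next_imps HA) in H; auto.
  apply nd_uncurry in H. exact H.
Qed.

Lemma nd_next_or {M Lam} (HA : admissible M Lam) D : wfl M D ->
  forall G, ND M Lam G (Next (bigOr D)) -> ND M Lam G (bigOr (map Next D)).
Proof.
  induction D; simpl; intros Hw G H.
  - eapply nd_app; eauto. apply (lam_N1 HA).
  - assert (WD : wfl M D) by (intros y Hy; apply Hw; simpl; auto).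
    assert (inL M a) by (apply Hw; simpl; auto).
    assert (inL M (bigOr (map Next D))).
    { apply wf_bigOr. intros y Hy. apply in_map_iff in Hy. destruct Hy as [z [<- Hz]]. simpl. apply WD; auto. }
    eapply nd_orE. eapply nd_app; [|exact H]. apply (lam_N3 HA); auto. apply wf_bigOr; auto.
    + apply nd_orI1; auto. apply nd_hyp. apply in_or_app; simpl; auto.
    + apply nd_orI2; auto. apply IHD; auto. apply nd_hyp. apply in_or_app; simpl; auto.
Qed.

Lemma lam_sound1 {M Lam} (HA : admissible M Lam) a b : inL M a -> ND M Lam [a] b -> Lam (Imp a b).
Proof. intros Ha H. apply (nd_sound HA) in H. exact H. intros y [<-|[]]; auto. Qed.

Lemma lam_dia_ax {M Lam} (HA : admissible M Lam) f : hasDia M = true -> inL M f ->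
  Lam (Imp (Or f (Next (Dia f))) (Dia f)).
Proof.
  intros. destruct HA as [_ [H1 _]]. apply H1. split. wfs. right; right; left; split; auto.
  eexists; reflexivity.
Qed.

Lemma lam_dia_unfold {M Lam} (HA : admissible M Lam) f : hasDia M = true -> inL M f ->
  Lam (Imp (Dia f) (Or f (Next (Dia f)))).
Proof.
  intros Hd Hf.
  pose proof (lam_dia_ax HA f Hd Hf) as Ax.
  assert (W : inL M (Dia f)) by (simpl; auto).
  assert (L1 : Lam (Imp f (Dia f))).
  { apply (lam_sound1 HA); auto. eapply nd_app; [exact Ax|]. apply nd_orI1; auto. apply nd_hyp; simpl; auto. }
  assert (L2 : Lam (Imp (Next (Dia f)) (Dia f))).
  { apply (lam_sound1 HA); auto. eapply nd_app; [exact Ax|]. apply nd_orI2; auto. apply nd_hyp; simpl; auto. }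
  set (X := Or f (Next (Dia f))).
  assert (WX : inL M X) by (simpl; auto).
  assert (L3 : Lam (Imp (Next X) X)).
  { apply (lam_sound1 HA); [exact WX|]. eapply nd_orE.
    eapply nd_app. apply (lam_N3 HA f (Next (Dia f))); simpl; auto. apply nd_hyp; simpl; auto.
    - apply nd_orI2; auto. eapply nd_app. apply (next_mono HA); exact L1. apply nd_hyp; simpl; auto.
    - apply nd_orI2; auto. eapply nd_app. apply (next_mono HA); exact L2. apply nd_hyp; simpl; auto. }
  pose proof HA as HA'. destruct HA' as [_ [_ [_ [_ [HD _]]]]]. destruct (HD Hd) as [R1 R2].
  eapply (lam_comp HA). apply (R1 f X). apply (lam_sound1 HA); auto. apply nd_orI1; auto. apply nd_hyp; simpl; auto.
  apply R2; auto.
Qed.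

Lemma lam_all1 {M Lam} (HA : admissible M Lam) f : hasAll M = true -> inL M f ->
  Lam (Iff (All f) (Next (All f))).
Proof.
  intros. destruct HA as [_ [H1 _]]. apply H1. split. wfs. right; right; right; split; auto.
  do 5 right. eexists; reflexivity.
Qed.

Lemma pt_imp {M Lam} (HA : admissible M Lam) P : prime_type M Lam P ->
  forall a b, Lam (Imp a b) -> tpos P a -> tpos P b.
Proof.
  intros HP a b H Ha. apply (pt_closed HA P HP [a]).
  intros y [<-|[]]; auto. eapply nd_app; eauto. apply nd_hyp; simpl; auto.
Qed.

Lemma sens_of {M Lam} (HA : admissible M Lam) P Q : prime_type M Lam P -> prime_type M Lam Q ->
  (forall f, inL M f -> (tpos P (Next f) <-> tpos Q f)) -> sensible P Q.
Proof.
  intros HP HQ Hiff.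
  assert (Hn : forall f, inL M f -> (tneg P (Next f) <-> tneg Q f)).
  { intros f Hf. rewrite (pt_neg_iff HA P HP (Next f) Hf), (pt_neg_iff HA Q HQ f Hf), Hiff; tauto. }
  split; [|split; [|split; [|split; [|split]]]].
  - intros f H. pose proof (pt_wf_pos P HP _ H). apply Hiff; auto.
  - intros f H. pose proof (pt_wf_neg P HP _ H). apply Hn; auto.
  - intros f H. pose proof (pt_wf_pos P HP _ H) as W. simpl in W. destruct W as [Hd Wf].
    apply (pt_imp HA P HP _ _ (lam_dia_unfold HA f Hd Wf)) in H.
    apply (pt_or HA P HP) in H. destruct H; auto. right. apply Hiff; simpl; auto.
  - intros f H. pose proof (pt_wf_neg P HP _ H) as W.
    apply (pt_neg_iff HA Q HQ _ W). intros HQd. apply (Hiff _ W) in HQd.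
    simpl in W. destruct W as [Hd Wf].
    apply (pt_neg_iff HA P HP (Dia f) (conj Hd Wf)) in H. apply H.
    eapply (pt_imp HA P HP); [|exact HQd].
    apply (lam_sound1 HA). simpl; auto. eapply nd_app. apply (lam_dia_ax HA f Hd Wf).
    apply nd_orI2. auto. apply nd_hyp; simpl; auto.
  - intros f. split; intros H.
    + pose proof (pt_wf_pos P HP _ H) as W. apply Hiff; auto.
      simpl in W. destruct W as [Ha Wf]. pose proof (lam_all1 HA f Ha Wf) as Ax.
      eapply (pt_imp HA P HP); [|exact H]. apply (lam_sound1 HA). simpl; auto.
      eapply nd_impE. eapply nd_andE1. apply nd_ax. exact Ax. apply nd_hyp. simpl; auto.
    + pose proof (pt_wf_pos Q HQ _ H) as W. apply Hiff in H; auto.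
      simpl in W. destruct W as [Ha Wf]. pose proof (lam_all1 HA f Ha Wf) as Ax.
      eapply (pt_imp HA P HP); [|exact H]. apply (lam_sound1 HA). simpl; auto.
      eapply nd_impE. eapply nd_andE2. apply nd_ax. exact Ax. apply nd_hyp. simpl; auto.
  - intros f. split; intros H.
    + pose proof (pt_wf_neg P HP _ H) as W.
      rewrite (pt_neg_iff HA P HP _ W) in H. rewrite (pt_neg_iff HA Q HQ _ W).
      intros H'. apply H. assert (tpos P (Next (All f))) by (apply Hiff; auto).
      simpl in W. destruct W as [Ha Wf]. pose proof (lam_all1 HA f Ha Wf) as Ax.
      eapply (pt_imp HA P HP); [|eassumption]. apply (lam_sound1 HA). simpl; auto.
      eapply nd_impE. eapply nd_andE2. apply nd_ax. exact Ax. apply nd_hyp. simpl; auto.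
    + pose proof (pt_wf_neg Q HQ _ H) as W.
      rewrite (pt_neg_iff HA Q HQ _ W) in H. rewrite (pt_neg_iff HA P HP _ W).
      intros H'. apply H. apply Hiff; auto.
      simpl in W. destruct W as [Ha Wf]. pose proof (lam_all1 HA f Ha Wf) as Ax.
      eapply (pt_imp HA P HP); [|eassumption]. apply (lam_sound1 HA). simpl; auto.
      eapply nd_impE. eapply nd_andE1. apply nd_ax. exact Ax. apply nd_hyp. simpl; auto.
Qed.

Definition succ (P : ttype) : ttype := TT (fun f => tpos P (Next f)) (fun f => tneg P (Next f)).

Lemma succ_prime {M Lam} (HA : admissible M Lam) P : prime_type M Lam P -> prime_type M Lam (succ P).
Proof.
  intros HP. split; [|split; [|split]]; simpl.
  - intros f H. exact (pt_wf_pos P HP _ H).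
  - intros f H. exact (pt_wf_neg P HP _ H).
  - intros f Hf. apply HP. exact Hf.
  - intros Hd. apply (derives_nd (M:=M)) in Hd. destruct Hd as [G [D [HG [HD H]]]].
    assert (WG : wfl M G) by (intros x Hx; exact (pt_wf_pos P HP _ (HG x Hx))).
    assert (WD : wfl M D) by (intros x Hx; exact (pt_wf_neg P HP _ (HD x Hx))).
    apply (nd_next HA) in H; auto. apply (nd_next_or HA) in H; auto.
    apply HP. eapply (nd_derives HA _ _ (map Next G) (map Next D)); eauto.
    + intros x Hx. apply in_map_iff in Hx. destruct Hx as [z [<- Hz]]. simpl; auto.
    + intros x Hx. apply in_map_iff in Hx. destruct Hx as [z [<- Hz]]. auto.
    + intros x Hx. apply in_map_iff in Hx. destruct Hx as [z [<- Hz]]. auto.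
Qed.

Lemma part1 {M Lam} (HA : admissible M Lam) P : prime_type M Lam P ->
  exists Q, prime_type M Lam Q /\ sensible P Q /\
       (forall Q', prime_type M Lam Q' -> sensible P Q' -> teq Q' Q).
Proof.
  intros HP. pose proof (succ_prime HA P HP) as HQ.
  exists (succ P). split; auto. split.
  - apply (sens_of HA); auto. simpl; tauto.
  - intros Q' HQ' HS. destruct HS as [S1 [S2 _]]. split; intros f; simpl; split; intros H.
    + pose proof (pt_wf_pos Q' HQ' _ H) as W.
      destruct (classic (tpos P (Next f))) as [|Hn]; auto. exfalso.
      apply (pt_neg_iff HA P HP (Next f) W) in Hn. apply S2 in Hn. eapply pt_disj; eauto.
    + auto.
    + pose proof (pt_wf_neg Q' HQ' _ H) as W.
      apply (pt_neg_iff HA P HP (Next f) W). intros Hp. apply S1 in Hp. eapply pt_disj; eauto.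
    + auto.
Qed.

Lemma part2 {M Lam} (HA : admissible M Lam) P Q P' Q' : prime_type M Lam P -> prime_type M Lam Q ->
     prime_type M Lam P' -> prime_type M Lam Q' ->
     tle P Q -> sensible P P' -> sensible Q Q' -> tle P' Q'.
Proof.
  intros HP HQ HP' HQ' [L1 L2] [S1 [S2 _]] [T1 [T2 _]]. split; intros f H.
  - pose proof (pt_wf_pos P' HP' _ H) as W.
    destruct (classic (tpos P (Next f))) as [Hp|Hn]. apply T1, L1, Hp.
    exfalso. apply (pt_neg_iff HA P HP (Next f) W) in Hn. apply S2 in Hn. exact (pt_disj HA P' HP' f H Hn).
  - pose proof (pt_wf_neg Q' HQ' _ H) as W.
    destruct (classic (tpos Q (Next f))) as [Hp|Hn].
    + exfalso. apply T1 in Hp. exact (pt_disj HA Q' HQ' f Hp H).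
    + apply (pt_neg_iff HA Q HQ (Next f) W) in Hn. apply S2, L2, Hn.
Qed.

Definition pr (a b : nat) : nat := Cantor.to_nat (a, b).
Arguments pr : simpl never.

Fixpoint enc (f : form) : nat :=
  match f with
  | Bot => 0
  | Var n => 1 + 9 * n
  | And a b => 2 + 9 * pr (enc a) (enc b)
  | Or a b => 3 + 9 * pr (enc a) (enc b)
  | Imp a b => 4 + 9 * pr (enc a) (enc b)
  | Next a => 5 + 9 * enc a
  | Dia a => 6 + 9 * enc a
  | Box a => 7 + 9 * enc a
  | All a => 8 + 9 * enc a
  end.

Lemma to_nat_inj a b c d : pr a b = pr c d -> a = c /\ b = d.
Proof.
  unfold pr; intros H. apply (f_equal Cantor.of_nat) in H. rewrite !Cantor.cancel_of_to in H.
  injection H; auto.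
Qed.

Lemma enc_inj f g : enc f = enc g -> f = g.
Proof.
  revert g; induction f; destruct g; simpl; intros H; try lia; try reflexivity;
  try (assert (E : forall x y, 2 + 9 * x = 2 + 9 * y -> x = y) by lia);
  repeat match goal with
  | H : S _ = S _ |- _ => injection H; clear H; intros H
  end;
  try (f_equal; lia);
  try (assert (H' : pr (enc f1) (enc f2) = pr (enc g1) (enc g2)) by lia;
       apply to_nat_inj in H'; destruct H'; f_equal; auto);
  try (f_equal; apply IHf; lia).
Qed.

Definition enum (n : nat) : form := epsilon (inhabits Bot) (fun f => enc f = n).

Lemma enum_enc f : enum (enc f) = f.
Proof.
  apply enc_inj. unfold enum. apply (epsilon_spec (inhabits Bot) (fun g => enc g = enc f)). eauto.
Qed.

Definition add (A : form -> Prop) (p : form) : form -> Prop := fun x => A x \/ x = p.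

Lemma derives_mono Lam (A B A' B' : form -> Prop) : (forall x, A x -> A' x) -> (forall x, B x -> B' x) ->
  derives Lam A B -> derives Lam A' B'.
Proof. intros H1 H2 [G [D [HG [HD HL]]]]. exists G, D; auto. Qed.

Definition form_eq_dec : forall x y : form, {x = y} + {x <> y}.
Proof. decide equality; apply Nat.eq_dec. Defined.

Lemma nd_bigOr_incl M Lam G D D' : wfl M D' -> incl D D' -> ND M Lam G (bigOr D) -> ND M Lam G (bigOr D').
Proof.
  intros W Hi H. eapply nd_orE_list; [apply wf_bigOr; auto| |exact H].
  intros x Hx. eapply nd_orI_list; eauto. apply nd_hyp. apply in_or_app; simpl; auto.
Qed.

Lemma derives_cut {M Lam} (HA : admissible M Lam) (A B : form -> Prop) p :
  (forall x, A x -> inL M x) -> (forall x, B x -> inL M x) -> inL M p ->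
  derives Lam (add A p) B -> derives Lam A (add B p) -> derives Lam A B.
Proof.
  intros WA WB Wp H1 H2.
  apply (derives_nd (M:=M)) in H1. destruct H1 as [G1 [D1 [HG1 [HD1 N1]]]].
  apply (derives_nd (M:=M)) in H2. destruct H2 as [G2 [D2 [HG2 [HD2 N2]]]].
  set (G1' := remove form_eq_dec p G1). set (D2' := remove form_eq_dec p D2).
  assert (HG1' : forall x, In x G1' -> A x).
  { intros x Hx. apply in_remove in Hx. destruct Hx as [Hx Hne]. destruct (HG1 x Hx); auto. congruence. }
  assert (HD2' : forall x, In x D2' -> B x).
  { intros x Hx. apply in_remove in Hx. destruct Hx as [Hx Hne]. destruct (HD2 x Hx); auto. congruence. }
  assert (WD : wfl M (D1 ++ D2')).
  { intros x Hx. apply in_app_or in Hx. destruct Hx; auto. }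
  apply (nd_derives HA _ _ (G1' ++ G2) (D1 ++ D2')).
  - intros x Hx. apply in_app_or in Hx. destruct Hx; auto.
  - intros x Hx. apply in_app_or in Hx. destruct Hx; auto.
  - intros x Hx. apply in_app_or in Hx. destruct Hx; auto.
  - eapply nd_orE_list; [apply wf_bigOr; auto| |].
    2: { eapply nd_weak; [exact N2|]. intros x Hx; apply in_or_app; auto. }
    intros x Hx. destruct (form_eq_dec x p) as [->|Hne].
    + apply (nd_bigOr_incl _ _ _ D1); auto.
      intros y Hy; apply in_or_app; auto.
      eapply nd_weak; [exact N1|]. intros y Hy. destruct (form_eq_dec y p) as [->|Hne].
      * apply in_or_app; simpl; auto.
      * apply in_or_app; left; apply in_or_app; left. apply in_in_remove; auto.
    + eapply nd_orI_list; auto.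
      * apply in_or_app; right. apply in_in_remove; eauto.
      * apply nd_hyp. apply in_or_app; simpl; auto.
Qed.

Fixpoint stage (M : modalities) (Lam : form -> Prop) (A B : form -> Prop) (n : nat) : ttype :=
  match n with
  | 0 => TT A B
  | S n => let s := stage M Lam A B n in let p := enum n in
    TT (fun x => tpos s x \/ (x = p /\ inL M p /\ ~ derives Lam (add (tpos s) p) (tneg s)))
       (fun x => tneg s x \/ (x = p /\ inL M p /\ derives Lam (add (tpos s) p) (tneg s)))
  end.

Lemma stage_wf M Lam A B : (forall x, A x -> inL M x) -> (forall x, B x -> inL M x) ->
  forall n, (forall x, tpos (stage M Lam A B n) x -> inL M x) /\ (forall x, tneg (stage M Lam A B n) x -> inL M x).
Proof.
  intros WA WB n; induction n; simpl; auto.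
  destruct IHn as [I1 I2]. split; intros x [H|[-> [H _]]]; auto.
Qed.

Lemma stage_mono M Lam A B n m : n <= m ->
  (forall x, tpos (stage M Lam A B n) x -> tpos (stage M Lam A B m) x) /\
  (forall x, tneg (stage M Lam A B n) x -> tneg (stage M Lam A B m) x).
Proof.
  induction 1; auto. destruct IHle as [I1 I2]. simpl. split; intros x Hx; left; auto.
Qed.

Lemma stage_cons {M Lam} (HA : admissible M Lam) A B : (forall x, A x -> inL M x) -> (forall x, B x -> inL M x) ->
  ~ derives Lam A B -> forall n, ~ derives Lam (tpos (stage M Lam A B n)) (tneg (stage M Lam A B n)).
Proof.
  intros WA WB H0 n. induction n; simpl; auto.
  destruct (stage_wf M Lam A B WA WB n) as [W1 W2].
  set (s := stage M Lam A B n) in *. set (p := enum n).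
  destruct (classic (derives Lam (add (tpos s) p) (tneg s))) as [D|D]; intros H.
  - destruct (classic (inL M p)) as [Wp|Wp].
    + apply IHn. apply (derives_cut HA _ _ p W1 W2 Wp D).
      eapply derives_mono; [| |exact H].
      * intros x [Hx|[_ [_ Hx]]]; tauto.
      * intros x [Hx|[Hx _]]; unfold add; tauto.
    + apply IHn. eapply derives_mono; [| |exact H].
      * intros x [Hx|[_ [_ Hx]]]; tauto.
      * intros x [Hx|[_ [Hx _]]]; tauto.
  - apply D. eapply derives_mono; [| |exact H].
    * intros x [Hx|[Hx _]]; unfold add; tauto.
    * intros x [Hx|[_ [_ Hx]]]; tauto.
Qed.

Lemma list_bound (Pn : nat -> form -> Prop) (l : list form) :
  (forall n m x, n <= m -> Pn n x -> Pn m x) ->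
  (forall x, In x l -> exists n, Pn n x) -> exists N, forall x, In x l -> Pn N x.
Proof.
  intros Hm. induction l; simpl; intros H.
  - exists 0; tauto.
  - destruct IHl as [N HN]; auto. destruct (H a) as [k Hk]; auto.
    exists (Nat.max N k). intros x [<-|Hx].
    + eapply Hm; [|exact Hk]. lia.
    + eapply Hm; [|apply HN; exact Hx]. lia.
Qed.

Lemma lindenbaum {M Lam} (HA : admissible M Lam) A B : (forall x, A x -> inL M x) -> (forall x, B x -> inL M x) ->
  ~ derives Lam A B -> exists T, prime_type M Lam T /\ (forall x, A x -> tpos T x) /\ (forall x, B x -> tneg T x).
Proof.
  intros WA WB H0.
  exists (TT (fun x => exists n, tpos (stage M Lam A B n) x) (fun x => exists n, tneg (stage M Lam A B n) x)).
  split; [split; [|split; [|split]]|split]; simpl.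
  - intros x [n Hn]. exact (proj1 (stage_wf M Lam A B WA WB n) x Hn).
  - intros x [n Hn]. exact (proj2 (stage_wf M Lam A B WA WB n) x Hn).
  - intros f Wf. set (n := enc f). assert (E : enum n = f) by apply enum_enc.
    destruct (classic (derives Lam (add (tpos (stage M Lam A B n)) (enum n)) (tneg (stage M Lam A B n)))) as [D|D].
    + right. exists (S n). simpl. right. rewrite E in D |- *. auto.
    + left. exists (S n). simpl. right. rewrite E in D |- *. auto.
  - intros [G [D [HG [HD HL]]]].
    destruct (list_bound (fun n x => tpos (stage M Lam A B n) x) G) as [N1 HN1]; auto.
    { intros n m x Hnm Hx. exact (proj1 (stage_mono M Lam A B n m Hnm) x Hx). }
    destruct (list_bound (fun n x => tneg (stage M Lam A B n) x) D) as [N2 HN2]; auto.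
    { intros n m x Hnm Hx. exact (proj2 (stage_mono M Lam A B n m Hnm) x Hx). }
    apply (stage_cons HA A B WA WB H0 (Nat.max N1 N2)).
    exists G, D. split; [|split]; auto.
    + intros x Hx. apply (proj1 (stage_mono M Lam A B N1 _ (Nat.le_max_l N1 N2))). auto.
    + intros x Hx. apply (proj2 (stage_mono M Lam A B N2 _ (Nat.le_max_r N1 N2))). auto.
  - intros x Hx. exists 0. exact Hx.
  - intros x Hx. exists 0. exact Hx.
Qed.

Lemma open_cons {M Lam} (HA : admissible M Lam) :
  (forall p q, inL M p -> inL M q -> Lam (Imp (Imp (Next p) (Next q)) (Next (Imp p q)))) ->
  forall P P' Q, prime_type M Lam P -> prime_type M Lam P' -> prime_type M Lam Q ->
  sensible P P' -> tle P' Q ->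
  ~ derives Lam (fun x => tpos P x \/ exists g, x = Next g /\ tpos Q g)
                (fun x => exists d, x = Next d /\ tneg Q d).
Proof.
  intros Hax P P' Q HP HP' HQ HS Hle Hd.
  apply (derives_nd (M:=M)) in Hd. destruct Hd as [G [D [HG [HD H]]]].
  assert (SA : exists G1 g, (forall x, In x G1 -> tpos P x) /\ tpos Q g /\
                 forall x, In x G -> ND M Lam (G1 ++ [Next g]) x).
  { clear H HD. induction G as [|x G IH].
    - exists [], Top. split; [|split]. intros y []. apply (pt_top HA Q HQ). intros y [].
    - destruct IH as [G1 [g [H1 [H2 H3]]]]. intros y Hy; apply HG; simpl; auto.
      destruct (HG x (or_introl eq_refl)) as [Hp|[h [-> Hh]]].
      + exists (x :: G1), g. split; [|split]; auto.
        * intros y [<-|Hy]; auto.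
        * intros y [<-|Hy]. apply nd_hyp; simpl; auto.
          eapply nd_weak. apply H3; auto. intros z Hz; simpl; auto.
      + assert (Wh : inL M h) by exact (pt_wf_pos Q HQ _ Hh).
        assert (Wg : inL M g) by exact (pt_wf_pos Q HQ _ H2).
        exists G1, (And h g). split; [|split]; auto.
        * apply (pt_closed HA Q HQ [h; g]). intros y [<-|[<-|[]]]; auto.
          apply nd_andI; apply nd_hyp; simpl; auto.
        * assert (E1 : Lam (Imp (Next (And h g)) (Next h))).
          { apply (next_mono HA). apply (lam_sound1 HA). simpl; auto.
            eapply nd_andE1. apply nd_hyp; simpl; auto. }
          assert (E2 : Lam (Imp (Next (And h g)) (Next g))).
          { apply (next_mono HA). apply (lam_sound1 HA). simpl; auto.
            eapply nd_andE2. apply nd_hyp; simpl; auto. }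
          intros y [<-|Hy].
          -- eapply nd_app. exact E1. apply nd_hyp. apply in_or_app; simpl; auto.
          -- eapply nd_subst. apply H3; auto. intros z Hz. apply in_app_or in Hz.
             destruct Hz as [Hz|[<-|[]]].
             ++ apply nd_hyp. apply in_or_app; auto.
             ++ eapply nd_app. exact E2. apply nd_hyp. apply in_or_app; simpl; auto. }
  assert (SB : exists d, tneg Q d /\ forall x, In x D -> Lam (Imp x (Next d))).
  { clear H HG SA. induction D as [|x D IH].
    - exists Bot. split. apply (pt_neg_iff HA Q HQ Bot I). apply (pt_bot HA Q HQ). intros y [].
    - destruct IH as [d [H1 H2]]. intros y Hy; apply HD; simpl; auto.
      destruct (HD x (or_introl eq_refl)) as [h [-> Hh]].
      assert (Wh : inL M h) by exact (pt_wf_neg Q HQ _ Hh).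
      assert (Wd : inL M d) by exact (pt_wf_neg Q HQ _ H1).
      exists (Or h d). split.
      + apply (pt_neg_iff HA Q HQ (Or h d)). simpl; auto.
        intros Ho. apply (pt_or HA Q HQ) in Ho. destruct Ho as [Ho|Ho].
        exact (pt_disj HA Q HQ h Ho Hh). exact (pt_disj HA Q HQ d Ho H1).
      + intros y [<-|Hy].
        * apply (next_mono HA). apply (lam_sound1 HA); auto. apply nd_orI1; auto. apply nd_hyp; simpl; auto.
        * eapply (lam_comp HA). apply H2; auto.
          apply (next_mono HA). apply (lam_sound1 HA); auto. apply nd_orI2; auto. apply nd_hyp; simpl; auto. }
  destruct SA as [G1 [g [HG1 [Hg HGG]]]]. destruct SB as [d [Hdn HDD]].
  assert (Wg : inL M g) by exact (pt_wf_pos Q HQ _ Hg).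
  assert (Wd : inL M d) by exact (pt_wf_neg Q HQ _ Hdn).
  assert (N1 : ND M Lam (G1 ++ [Next g]) (Next d)).
  { apply (nd_orE_list M Lam _ D); [simpl; exact Wd| |].
    - intros x Hx. eapply nd_app. apply (HDD x Hx). apply nd_hyp. apply in_or_app; simpl; auto.
    - eapply nd_subst; eauto. }
  apply nd_impI in N1; [|simpl; auto].
  apply (pt_closed HA P HP G1) in N1; auto.
  apply (pt_imp HA P HP _ _ (Hax g d Wg Wd)) in N1.
  destruct HS as [S1 _]. apply S1 in N1. apply (proj1 Hle) in N1.
  assert (tpos Q d).
  { apply (pt_closed HA Q HQ [g; Imp g d]). intros y [<-|[<-|[]]]; auto.
    eapply nd_impE; apply nd_hyp; simpl; auto. }
  exact (pt_disj HA Q HQ d H0 Hdn).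
Qed.

Lemma part3 {M Lam} (HA : admissible M Lam) :
  (forall p q, inL M p -> inL M q -> Lam (Imp (Imp (Next p) (Next q)) (Next (Imp p q)))) ->
   forall P P' Q, prime_type M Lam P -> prime_type M Lam P' ->
     prime_type M Lam Q -> sensible P P' -> tle P' Q ->
     exists T, prime_type M Lam T /\ tle P T /\ sensible T Q.
Proof.
  intros Hx P P' Q HP HP' HQ HS Hle.
  pose proof (open_cons HA Hx P P' Q HP HP' HQ HS Hle) as Hc.
  apply (lindenbaum HA) in Hc.
  - destruct Hc as [T [HT [T1 T2]]]. exists T. split; auto. split.
    + split; intros f H; auto.
      pose proof (pt_wf_neg T HT _ H) as W.
      destruct HP as [_ [_ [Hcov _]]]. destruct (Hcov f W) as [Hp|Hn]; auto.
      exfalso. exact (pt_disj HA T HT f (T1 f (or_introl Hp)) H).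
    + apply (sens_of HA); auto. intros f Wf. split; intros H.
      * destruct (classic (tpos Q f)) as [|Hn]; auto. exfalso.
        apply (pt_neg_iff HA Q HQ f Wf) in Hn.
        exact (pt_disj HA T HT _ H (T2 _ (ex_intro _ f (conj eq_refl Hn)))).
      * apply T1. right. eauto.
  - intros x [Hp|[g [-> Hg]]]. exact (pt_wf_pos P HP _ Hp). exact (pt_wf_pos Q HQ _ Hg).
  - intros x [d [-> Hd]]. exact (pt_wf_neg Q HQ _ Hd).
Qed.

Theorem lemma5p5 (M : modalities) (Lam : form -> Prop) :
  admissible M Lam ->
  (* S_c is a function W_c -> W_c *)
  (forall P, prime_type M Lam P ->
     exists Q, prime_type M Lam Q /\ sensible P Q /\
       (forall Q', prime_type M Lam Q' -> sensible P Q' -> teq Q' Q)) /\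
  (* S_c is monotone *)
  (forall P Q P' Q', prime_type M Lam P -> prime_type M Lam Q ->
     prime_type M Lam P' -> prime_type M Lam Q' ->
     tle P Q -> sensible P P' -> sensible Q Q' -> tle P' Q') /\
  (* S_c is open, under the extra axiom *)
  ((forall p q, inL M p -> inL M q ->
      Lam (Imp (Imp (Next p) (Next q)) (Next (Imp p q)))) ->
   forall P P' Q, prime_type M Lam P -> prime_type M Lam P' ->
     prime_type M Lam Q -> sensible P P' -> tle P' Q ->
     exists T, prime_type M Lam T /\ tle P T /\ sensible T Q).
Proof.
  intros HA. split; [|split].
  - intros P HP. exact (part1 HA P HP).
  - intros P Q P' Q'. apply (part2 HA).
  - intros Hx. exact (part3 HA Hx).
Qed.
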